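(* Let $P$ be a finite nonempty set and let $\emptyset=Y_0\subseteq Y_1\subseteq\dots\subseteq Y_m\subsetneq P$ be a fixed sequence of subsets. Consider the random process: choose $p$ uniformly at random from $P$; then for $t=1,\dots,m$, if $p\in Y_t$, replace $p$ by a fresh element chosen uniformly at random from $P\setminus Y_t$ (independently of all previous choices), and call this a resampling. Then the expected total number of samplings (the initial choice plus all resamplings) is $O(\log|P|)$.
   Context: In the application, $P$ is the set of vertex pairs realizing the diameter, and $Y_t$ is the set of such pairs whose distance has decreased after the first $t$ edge insertions of a sequence that does not decrease the diameter; the sequence is fixed independently of the random choices. *)

(* Defs.v *)
From HB Require Import structures.
From mathcomp Require Import all_boot all_order all_algebra.
From mathcomp Require Import reals exp.
Set Implicit Arguments. Unset Strict Implicit. Unset Printing Implicit Defensive.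
Import Order.TTheory GRing.Theory Num.Theory.
Local Open Scope ring_scope.

Definition unif (R : realType) (T : finType) (S : {set T}) (x : T) : R :=
  if x \in S then (#|S|%:R)^-1 else 0.

(* resample_dist P Y t x k = Pr[ after steps 1..t, the current element is x
   and exactly k samplings (initial choice + resamplings) have been made ]. *)
Fixpoint resample_dist (R : realType) (T : finType) (P : {set T})
    (Y : nat -> {set T}) (t : nat) : T -> nat -> R :=
  match t with
  | 0 => fun x k => unif R P x * (k == 1%N)%:R
  | t'.+1 => fun y k =>
      (y \notin Y t)%:R * resample_dist R P Y t' y k
      + unif R (P :\: Y t) y *
        (if k is k'.+1 then \sum_(x in Y t) resample_dist R P Y t' x k' else 0)
  end.

(* Expected total number of samplings after the m steps (at most m+1). *)
Definition expected_samplings (R : realType) (T : finType) (P : {set T})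
    (Y : nat -> {set T}) (m : nat) : R :=
  \sum_(x : T) \sum_(k < m.+2) (k : nat)%:R * resample_dist R P Y m x k.

(* Main.v *)
Require Import Defs.
From HB Require Import structures.
From mathcomp Require Import all_boot all_order all_algebra.
From mathcomp Require Import reals exp.
From mathcomp Require Import zify ring lra.
Import Order.TTheory GRing.Theory Num.Theory.
Local Open Scope ring_scope.

Lemma dist_supp (R : realType) (T : finType) (P : {set T}) (Y : nat -> {set T}) t x k :
  (t.+1 < k)%N -> resample_dist R P Y t x k = 0.
Proof.
elim: t x k => [|t IH] x k hk /=.
  have : (k == 1)%N = false by apply/eqP => e; rewrite e in hk.
  by move=> ->; rewrite mulr0.
rewrite IH ?mulr0 ?add0r; last by lia.
case: k hk => [//|k] hk.
by rewrite big1 ?mulr0 // => x' _; apply: IH; lia.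
Qed.

Section S.
Variables (R : realType) (T : finType) (P : {set T}) (Y : nat -> {set T}).
Definition M t x := \sum_(k < t.+2) resample_dist R P Y t x k.

Lemma M_step t y : M t.+1 y = (y \notin Y t.+1)%:R * M t y
   + unif R (P :\: Y t.+1) y * \sum_(x in Y t.+1) M t x.
Proof.
rewrite /M /= big_split /= -!mulr_sumr; congr (_ + _).
  by rewrite big_ord_recr /= dist_supp // addr0.
congr (_ * _); rewrite big_ord_recl /= add0r exchange_big /=.
apply: eq_bigr => x _; apply: eq_bigr => i _.
by [].
Qed.

Lemma E_step t :
  \sum_x \sum_(k < t.+3) (k:nat)%:R * resample_dist R P Y t.+1 x k =
  \sum_x ((x \notin Y t.+1)%:R * \sum_(k < t.+2) (k:nat)%:R * resample_dist R P Y t x k)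
  + (\sum_x unif R (P :\: Y t.+1) x) *
    \sum_(x in Y t.+1) \sum_(k < t.+2) (k.+1)%:R * resample_dist R P Y t x k.
Proof.
rewrite mulr_suml -big_split /=; apply: eq_bigr => y _.
rewrite /= (eq_bigr (fun k : 'I_(t.+3) => (k:nat)%:R * ((y \notin Y t.+1)%:R * resample_dist R P Y t y k) + (k:nat)%:R * (unif R (P :\: Y t.+1) y *
        (if (k:nat) is k'.+1 then \sum_(x in Y t.+1) resample_dist R P Y t x k' else 0)))); last by move=> k _; rewrite mulrDr.
rewrite big_split /=; congr (_ + _).
  rewrite mulr_sumr big_ord_recr /= dist_supp // !mulr0 addr0.
  by apply: eq_bigr => k _; rewrite mulrCA.
rewrite big_ord_recl /= mul0r add0r.
transitivity (unif R (P :\: Y t.+1) y * \sum_(i < t.+2) \sum_(x in Y t.+1) (i.+1)%:R * resample_dist R P Y t x i).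
  rewrite mulr_sumr; apply: eq_bigr => i _; rewrite mulrCA /bump /= -mulr_sumr add0n add1n.
  by congr (_ * _); rewrite mulr_sumr.
by congr (_ * _); apply: exchange_big.
Qed.


Lemma sum_unif_in (A S : {set T}) :
  \sum_(x in A) unif R S x = #|A :&: S|%:R / #|S|%:R.
Proof.
rewrite /unif -big_mkcondr /=.
rewrite (eq_bigl (fun x => x \in A :&: S)); last by move=> x; rewrite in_setI.
by rewrite sumr_const mulr_natl.
Qed.

Lemma sum_unif (S : {set T}) : S != set0 -> \sum_x unif R S x = 1.
Proof.
move=> hS; rewrite /unif -big_mkcond sumr_const -(mulr_natr (_^-1)) mulVf //.
by rewrite pnatr_eq0 -lt0n card_gt0.
Qed.

Lemma ln_bound (a c : R) : 0 < c -> c <= a -> 1 - c / a <= ln a - ln c.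
Proof.
move=> c0 ca; have a0 : 0 < a by apply: lt_le_trans ca.
have h := @le_ln1Dx R (c / a - 1).
rewrite addrCA subrr addr0 ln_div ?posrE // in h.
have : -1 < c / a - 1 by have := divr_gt0 c0 a0; lra.
move=> /h; lra.
Qed.

Definition Etot t := \sum_x \sum_(k < t.+2) (k:nat)%:R * resample_dist R P Y t x k.

Lemma card_split (A B C : {set T}) : B \subset C ->
  #|A :\: B| = (#|(A :\: B) :&: C| + #|A :\: C|)%N.
Proof.
move=> BC; rewrite -(cardsID C (A :\: B)) setDDl (setUidPr BC) //.
Qed.

Hypotheses (Y0 : Y 0%N = set0) (m : nat)
  (Ymono : forall t, (t < m)%N -> Y t \subset Y t.+1) (Yprop : Y m \proper P).

Lemma Ysub s t : (s <= t)%N -> (t <= m)%N -> Y s \subset Y t.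
Proof.
elim: t => [|t IH] st tm; first by rewrite leqn0 in st; rewrite (eqP st).
rewrite leq_eqVlt in st; case/orP: st => [/eqP -> //|st].
have h1 : (s <= t)%N by lia.
have h2 : (t <= m)%N by lia.
have h3 : (t < m)%N by lia.
exact: subset_trans (IH h1 h2) (Ymono t h3).
Qed.

Lemma YP t : (t <= m)%N -> Y t \subset P.
Proof. move=> tm; apply: subset_trans (@Ysub t m tm (leqnn m)) _; exact: proper_sub. Qed.

Lemma Ycomp t : (t <= m)%N -> (0 < #|P :\: Y t|)%N.
Proof.
move=> tm; rewrite cardsD (setIidPr (YP t tm)) subn_gt0.
apply: (leq_ltn_trans (subset_leq_card (@Ysub t m tm (leqnn m)))).
exact: proper_card.
Qed.

Lemma M_unif t : (t <= m)%N -> forall x, M t x = unif R (P :\: Y t) x.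
Proof.
elim: t => [|t IH] tm x.
  by rewrite /M /= !big_ord_recr big_ord0 /= Y0 setD0 mulr0 mulr1 !add0r.
rewrite M_step.
have tm' : (t <= m)%N by lia.
rewrite IH //.
under eq_bigr do rewrite IH //.
rewrite sum_unif_in.
have Ysb := Ymono t (ltac:(lia)).
have hc := @card_split P (Y t) (Y t.+1) Ysb.
have a0 := Ycomp t tm'. have c0 := Ycomp t.+1 tm.
rewrite /unif; case hx: (x \in P :\: Y t.+1).
  move: (hx); rewrite in_setD => /andP [nY xP].
  have hx2 : x \in P :\: Y t by rewrite in_setD xP (contra (subsetP Ysb x) nY).
  rewrite hx2 nY /= mul1r.
  rewrite setIC hc natrD.
  field.
  by rewrite -natrD -hc !pnatr_eq0 -!lt0n c0 a0.
rewrite mul0r addr0; case hy: (x \in Y t.+1) => /=; first by rewrite mul0r.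
move: hx; rewrite in_setD hy /= => xP.
by rewrite in_setD xP andbF mulr0.
Qed.

Lemma Etot_step t : (t < m)%N ->
  Etot t.+1 = Etot t + #|(P :\: Y t) :&: Y t.+1|%:R / #|P :\: Y t|%:R.
Proof.
move=> tm.
rewrite /Etot E_step sum_unif ?mul1r; last by rewrite -card_gt0 Ycomp.
have e1 : \sum_(x in Y t.+1) \sum_(k < t.+2) (k.+1)%:R * resample_dist R P Y t x k
   = \sum_(x in Y t.+1) \sum_(k < t.+2) (k:nat)%:R * resample_dist R P Y t x k
     + \sum_(x in Y t.+1) M t x.
  rewrite -big_split; apply: eq_bigr => x _; rewrite /M -big_split.
  by apply: eq_bigr => k _; rewrite -addn1 natrD mulrDl mul1r.
rewrite e1 addrA; congr (_ + _).
  rewrite [in RHS](bigID (fun x => x \in Y t.+1)) /= addrC; congr (_ + _).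
  rewrite [RHS]big_mkcond /=; apply: eq_bigr => x _.
  by case: (x \in Y t.+1); rewrite /= ?mul1r ?mul0r.
have tm' : (t <= m)%N by lia.
under eq_bigr do rewrite M_unif //.
by rewrite sum_unif_in setIC.
Qed.

Lemma Ebound t : (t <= m)%N ->
  Etot t <= 1 + ln (#|P|%:R) - ln (#|P :\: Y t|%:R).
Proof.
elim: t => [|t IH] tm.
  have -> : Etot 0 = 1.
    transitivity (\sum_x unif R P x); last first.
      by apply: sum_unif; apply/set0Pn; case/properP: Yprop => _ [x xP _]; exists x.
    apply: eq_bigr => x _; rewrite !big_ord_recr big_ord0 /=.
    by rewrite !mul0r mul1r mulr1 !add0r.
  by rewrite Y0 setD0 addrK.
have tm' : (t <= m)%N by lia.
rewrite Etot_step //.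
have Ysb := Ymono t tm.
have hc := @card_split P (Y t) (Y t.+1) Ysb.
have a0 := Ycomp t tm'. have c0 := Ycomp t.+1 tm.
have hb := @ln_bound (#|P :\: Y t|%:R) (#|P :\: Y t.+1|%:R).
have e : #|(P :\: Y t) :&: Y t.+1|%:R / #|P :\: Y t|%:R
   = 1 - #|P :\: Y t.+1|%:R / #|P :\: Y t|%:R :> R.
  rewrite hc natrD; field.
  by rewrite -natrD -hc pnatr_eq0 -lt0n a0.
rewrite e.
have := IH tm'.
have : 1 - #|P :\: Y t.+1|%:R / #|P :\: Y t|%:R <=
   ln (#|P :\: Y t|%:R) - ln (#|P :\: Y t.+1|%:R) :> R.
  apply: hb; first by rewrite ltr0n.
  by rewrite ler_nat hc leq_addl.
lra.
Qed.

End S.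

Theorem claim15 (R : realType) :
  exists C : R, 0 < C /\
    forall (T : finType) (P : {set T}) (Y : nat -> {set T}) (m : nat),
      (2 <= #|P|)%N ->
      Y 0%N = set0 ->
      (forall t, (t < m)%N -> Y t \subset Y t.+1) ->
      Y m \proper P ->
      expected_samplings R P Y m <= C * ln (#|P|%:R).
Proof.
have l2 : 0 < ln (2 : R) by apply: ln_gt0; lra.
exists (1 + (ln (2:R))^-1); split; first by have := invr_gt0 (ln (2:R)); rewrite l2; lra.
move=> T P Y m hP Y0 Ymono Yprop.
have h := @Ebound R T P Y Y0 m Ymono Yprop m (leqnn m).
have c0 := @Ycomp T P Y m Ymono Yprop m (leqnn m).
have lc : 0 <= ln (#|P :\: Y m|%:R : R) by apply: ln_ge0; rewrite ler1n.
have ln2 : ln (2:R) <= ln (#|P|%:R) .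
  rewrite ler_ln ?posrE ?ltr0n //; last by lia.
  by rewrite ler_nat.
have r : 1 <= ln (#|P|%:R : R) / ln 2.
  by rewrite ler_pdivlMr // mul1r.
rewrite /expected_samplings.
change (Etot R T P Y m <= (1 + (ln 2)^-1) * ln #|P|%:R).
rewrite mulrDl mul1r mulrC.
lra.
Qed.
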